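(* Let $W$ be an sc-Banach space, $E=\mathbb R^n\oplus W$, $C=[0,\infty)^n\oplus W$, identify $W$ with $\{0\}\oplus W$, and let $N$ be a finite-dimensional subspace of $E$ in good position to $C$. Let $\Sigma=\bigcup_{a\in C\cap N,\,a\neq0}\sigma_a$, $\Sigma^c=\{1,\dots,n\}\setminus\Sigma$, and let $\widetilde N$ be an algebraic complement of $N\cap W$ in $N$. Then either $\widetilde N\cap(\mathbb R^{\Sigma^c}\oplus W)=\{0\}$ or $\widetilde N\subset\mathbb R^{\Sigma^c}\oplus W$; in the second case $\dim\widetilde N=1$ and $\Sigma=\emptyset$.
   Context: An sc-Banach space is a Banach space $W$ with nested Banach spaces $W=W_0\supset W_1\supset\cdots$, compact inclusions $W_n\to W_m$ ($m<n$), $\bigcap W_m$ dense in each $W_m$; $E$ has levels $\mathbb R^n\oplus W_m$ and $\|\cdot\|$ is its level-$0$ norm. For $a=(a_1,\dots,a_n,a_\infty)\in C$, $\sigma_a=\{i\in\{1,\dots,n\}: a_i=0\}$; for $S\subset\{1,\dots,n\}$, $\mathbb R^S=\{x\in\mathbb R^n:x_j=0\text{ for } j\notin S\}$. An sc-complement of $N$ is a closed subspace $N^\perp$ with $E_m=(N\cap E_m)\oplus(N^\perp\cap E_m)$ topologically for all $m$, both sc-subspaces. $N$ is in good position to $C$ if $N\cap C$ has nonempty interior in $N$ and there exist an sc-complement $N^\perp$ and $c>0$ such that for every $(n,m)\in N\oplus N^\perp$ with $\|m\|\le c\|n\|$: $n+m\in C$ iff $n\in C$. *)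

(* Defs.v *)
From HB Require Import structures.
From mathcomp Require Import all_boot all_order all_algebra.
From mathcomp Require Export reals.
Set Implicit Arguments. Unset Strict Implicit. Unset Printing Implicit Defensive.
Import Order.TTheory GRing.Theory Num.Theory.
Local Open Scope ring_scope.

Section SC.
Variable R : realType.

Section Gen.
Variable V : lmodType R.

Definition is_lsubspace (S : V -> Prop) : Prop :=
  S 0 /\ (forall x y, S x -> S y -> S (x + y)) /\
  (forall (a : R) x, S x -> S (a *: x)).

Definition is_norm_on (S : V -> Prop) (nu : V -> R) : Prop :=
  (forall x, S x -> 0 <= nu x) /\
  (forall x, S x -> nu x = 0 -> x = 0) /\
  (forall (a : R) x, S x -> nu (a *: x) = `|a| * nu x) /\
  (forall x y, S x -> S y -> nu (x + y) <= nu x + nu y).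

Definition cauchy_in (nu : V -> R) (u : nat -> V) : Prop :=
  forall eps : R, 0 < eps -> exists M : nat,
    forall p q : nat, (M <= p)%N -> (M <= q)%N -> nu (u p - u q) < eps.

Definition converges_in (nu : V -> R) (u : nat -> V) (x : V) : Prop :=
  forall eps : R, 0 < eps -> exists M : nat,
    forall p : nat, (M <= p)%N -> nu (u p - x) < eps.
End Gen.

Record sc_structure (W : lmodType R) := SCStructure {
  sc_lvl : nat -> W -> Prop;
  sc_nrm : nat -> W -> R;
  sc_lvl0 : forall x, sc_lvl 0 x;
  sc_nested : forall m x, sc_lvl m.+1 x -> sc_lvl m x;
  sc_subspace : forall m, is_lsubspace (sc_lvl m);
  sc_normP : forall m, is_norm_on (sc_lvl m) (sc_nrm m);
  sc_complete : forall m (u : nat -> W), (forall j, sc_lvl m (u j)) ->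
    cauchy_in (sc_nrm m) u -> exists x, sc_lvl m x /\ converges_in (sc_nrm m) u x;
  sc_compact : forall m k, (m < k)%N -> forall u : nat -> W,
    (forall j, sc_lvl k (u j)) -> (exists B : R, forall j, sc_nrm k (u j) <= B) ->
    exists phi : nat -> nat, (forall j, (phi j < phi j.+1)%N) /\
      exists x, sc_lvl m x /\ converges_in (sc_nrm m) (fun j => u (phi j)) x;
  sc_dense : forall m x, sc_lvl m x -> forall eps : R, 0 < eps ->
    exists y, (forall k, sc_lvl k y) /\ sc_nrm m (x - y) < eps
}.

Variables (n : nat) (W : lmodType R) (sc : sc_structure W).

Definition E := ('rV[R]_n * W)%type.

Definition rvnorm (x : 'rV[R]_n) : R := \big[Num.max/0]_(i < n) `|x ord0 i|.

Definition Elvl (m : nat) (p : E) : Prop := sc_lvl sc m p.2.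
Definition Enrm (m : nat) (p : E) : R := Num.max (rvnorm p.1) (sc_nrm sc m p.2).
Definition Enorm (p : E) : R := Enrm 0 p.

Definition closed_in_lvl (F : E -> Prop) (m : nat) : Prop :=
  forall (u : nat -> E) (x : E), (forall j, F (u j) /\ Elvl m (u j)) ->
    Elvl m x -> converges_in (Enrm m) u x -> F x.

(* sc-subspace: closed linear subspace F whose induced filtration F_m = F /\ E_m
   is an sc-structure (F_m closed in E_m, F_infty dense in each F_m) *)
Definition sc_subspace_of (F : E -> Prop) : Prop :=
  is_lsubspace F /\ (forall m, closed_in_lvl F m) /\
  (forall m x, F x -> Elvl m x -> forall eps : R, 0 < eps ->
     exists y, F y /\ (forall k, Elvl k y) /\ Enrm m (x - y) < eps).

(* E_m = (A /\ E_m) (+) (B /\ E_m) topologically *)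
Definition top_dsum_lvl (m : nat) (A B : E -> Prop) : Prop :=
  (forall x, Elvl m x -> exists a b, A a /\ Elvl m a /\ B b /\ Elvl m b /\ x = a + b) /\
  (forall x, Elvl m x -> A x -> B x -> x = 0) /\
  (exists K : R, 0 < K /\ forall a b, A a -> Elvl m a -> B b -> Elvl m b ->
      Enrm m a <= K * Enrm m (a + b)).

Definition sc_complement (N Np : E -> Prop) : Prop :=
  sc_subspace_of N /\ sc_subspace_of Np /\ forall m, top_dsum_lvl m N Np.

Definition Cone (p : E) : Prop := forall i : 'I_n, 0 <= p.1 ord0 i.

Definition good_position (N : E -> Prop) : Prop :=
  (exists a, N a /\ Cone a /\ exists eps : R, 0 < eps /\
      forall b, N b -> Enorm (b - a) < eps -> Cone b) /\
  (exists (Np : E -> Prop) (c : R), sc_complement N Np /\ 0 < c /\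
      forall x y, N x -> Np y -> Enorm y <= c * Enorm x ->
        (Cone (x + y) <-> Cone x)).

Definition finite_dim (N : E -> Prop) : Prop :=
  exists (k : nat) (v : 'I_k -> E),
    forall x, N x <-> exists c : 'I_k -> R, x = \sum_(i < k) c i *: v i.

Definition inW (p : E) : Prop := p.1 = 0.

Definition sigma (a : E) (i : 'I_n) : Prop := a.1 ord0 i = 0.
Definition Sigma (N : E -> Prop) (i : 'I_n) : Prop :=
  exists a, Cone a /\ N a /\ a <> 0 /\ sigma a i.

Definition RSigmac_W (N : E -> Prop) (p : E) : Prop :=
  forall i : 'I_n, Sigma N i -> p.1 ord0 i = 0.

Definition alg_complement (S N Nt : E -> Prop) : Prop :=
  is_lsubspace Nt /\ (forall x, Nt x -> N x) /\
  (forall x, Nt x -> S x -> x = 0) /\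
  (forall x, N x -> exists y z, Nt y /\ S z /\ x = y + z).

End SC.

(* Main.v *)
Require Import Defs.
From HB Require Import structures.
From mathcomp Require Import all_boot all_order all_algebra.
From mathcomp Require Import reals.
From Stdlib Require Import Classical.
Import Order.TTheory GRing.Theory Num.Theory.
Local Open Scope ring_scope.
Set Implicit Arguments. Unset Strict Implicit.

Section Helpers.
Variables (R : realType) (n : nat) (W : lmodType R) (sc : sc_structure W).
Notation ET := (@E R n W).

Lemma cD (x y : ET) i : (x + y).1 ord0 i = x.1 ord0 i + y.1 ord0 i.
Proof. by rewrite /= mxE. Qed.

Lemma cZ (t : R) (x : ET) i : (t *: x).1 ord0 i = t * x.1 ord0 i.
Proof. by rewrite /= mxE. Qed.

Lemma rvnormZ (t : R) (r : 'rV[R]_n) : rvnorm (t *: r) = `|t| * rvnorm r.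
Proof.
rewrite /rvnorm; elim/big_rec2: _ => [|i y1 y2 _ ->]; first by rewrite mulr0.
by rewrite mxE normrM maxr_pMr.
Qed.

Lemma EnormZ (t : R) (p : ET) : Enorm sc (t *: p) = `|t| * Enorm sc p.
Proof.
rewrite /Enorm /Enrm /= rvnormZ.
have [_ [_ [hz _]]] := sc_normP sc 0.
rewrite hz; last exact: sc_lvl0. by rewrite maxr_pMr // normr_ge0.
Qed.

Lemma Enorm_ge0 (p : ET) : 0 <= Enorm sc p.
Proof.
have [h0 _] := sc_normP sc 0.
by rewrite /Enorm /Enrm le_max; apply/orP; right; apply: h0; apply: sc_lvl0.
Qed.

Lemma Enorm_gt0 (p : ET) : p <> 0 -> 0 < Enorm sc p.
Proof.
move=> pne.
have [h0 [h1 _]] := sc_normP sc 0.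
case: (classic (p.2 = 0)) => h2.
- have [i hi] : exists i, p.1 ord0 i != 0.
    apply: NNPP => H; apply: pne; case: p h2 H => p1 p2 /= -> H.
    have -> : p1 = 0; last by [].
    apply/rowP => i; rewrite mxE; apply: NNPP => Hi; apply: H; exists i; exact/eqP.
  rewrite /Enorm /Enrm lt_max; apply/orP; left.
  apply: (lt_le_trans _ (le_bigmax _ _ i)); by rewrite normr_gt0.
- rewrite /Enorm /Enrm lt_max; apply/orP; right.
  rewrite lt_neqAle h0; last exact: sc_lvl0. rewrite andbT eq_sym; apply/eqP => H.
  by apply: h2; apply: h1 => //; apply: sc_lvl0.
Qed.


Lemma key (N : ET -> Prop) : is_lsubspace N -> forall (y : ET) j, N y ->
  RSigmac_W N y -> y.1 ord0 j < 0 -> forall v, N v -> Cone v ->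
  exists s : R, v = s *: y.
Proof.
move=> [N0 [ND NZ]] y j Ny Ry yj v Nv Cv.
apply: NNPP => H.
pose P := [pred i : 'I_n | y.1 ord0 i < 0].
pose F := fun i : 'I_n => v.1 ord0 i / (- y.1 ord0 i).
have Pj : P j by [].
case: (arg_minP F Pj) => k Pk Hmin.
have yk : y.1 ord0 k < 0 by [].
set t := F k.
have t0 : 0 <= t by rewrite /t /F divr_ge0 // ?Cv // oppr_ge0 ltW.
set b := v + t *: y.
have Nb : N b by apply: ND => //; apply: NZ.
have Cb : Cone b.
  move=> i; rewrite cD cZ.
  case: (ltP (y.1 ord0 i) 0) => yi.
  - have := Hmin i yi; rewrite /F -/t ler_pdivlMr ?oppr_gt0 //.
    by rewrite mulrN => h; rewrite -[t * _]opprK subr_ge0.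
  - by rewrite addr_ge0 ?Cv // mulr_ge0.
have bk : b.1 ord0 k = 0.
  rewrite cD cZ /t /F invrN mulrN mulNr divfK ?subrr //.
  by rewrite lt_eqF.
have bne : b <> 0.
  move=> b0; apply: H; exists (- t).
  by apply/eqP; rewrite scaleNr -subr_eq0 opprK -/b b0.
have Sk : Sigma N k by exists b.
by move: (Ry k Sk); move/eqP; rewrite lt_eqF.
Qed.

End Helpers.

Theorem lemma6p9 (R : realType) (n : nat) (W : lmodType R)
  (sc : sc_structure W) (N Nt : @E R n W -> Prop) :
  is_lsubspace N -> finite_dim N -> good_position sc N ->
  alg_complement (fun x => N x /\ inW x) N Nt ->
  (forall x, Nt x -> RSigmac_W N x -> x = 0) \/
  ((forall x, Nt x -> RSigmac_W N x) /\
   (exists v : @E R n W, v <> 0 /\ forall x, Nt x <-> exists t : R, x = t *: v) /\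
   (forall i : 'I_n, ~ Sigma N i)).
Proof.
move=> HN _ [[a [Na [Ca [eps [eps0 Hball]]]]] [Np [c [[_ [[HNp _] Hds]] [c0 Hc]]]]]
  [HNt [NtN [NtW _]]].
have [N0 [ND NZ]] := HN.
case: (classic (exists z, N z /\ inW z /\ z <> 0)) => [[z [Nz [Wz zne]]]|HW].
  left => x Ntx Rx; apply: NtW => //; split; first exact: NtN.
  rewrite /inW; apply/rowP => i; rewrite mxE; apply: Rx.
  exists z; split; last split=> //; last split=> //.
    by move=> k; rewrite Wz mxE.
  by rewrite /sigma Wz mxE.
case: (classic (forall x, Nt x -> RSigmac_W N x -> x = 0)) => [H|H]; first by left.
right.
have [x [Ntx [Rx xne]]] : exists x, Nt x /\ RSigmac_W N x /\ x <> 0.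
  apply: NNPP => H'; apply: H => x Ntx Rx; apply: NNPP => xne; apply: H'; by exists x.
have Nx := NtN _ Ntx.
have [j xj] : exists j, x.1 ord0 j != 0.
  apply: NNPP => H'; apply: xne; apply: NNPP => xne; apply: HW; exists x; split=> //; split=> //.
  apply/rowP => i; rewrite mxE; apply: NNPP => Hi; apply: H'; exists i; exact/eqP.
have Hmult : forall v, N v -> Cone v -> exists s : R, v = s *: x.
  move=> v Nv Cv.
  case: (ltP (x.1 ord0 j) 0) => xj0.
    exact: (key HN Nx Rx xj0 Nv Cv).
  have Nmx : N ((-1) *: x) by apply: NZ.
  have Rmx : RSigmac_W N ((-1) *: x) by move=> i Si; rewrite cZ (Rx i Si) mulr0.
  have mxj : ((-1) *: x).1 ord0 j < 0.
    by rewrite cZ mulN1r oppr_lt0 lt_neqAle eq_sym xj xj0.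
  have [s ->] := key HN Nmx Rmx mxj Nv Cv.
  by exists (s * -1); rewrite scalerA.
have Hall : forall b, N b -> exists s : R, b = s *: x.
  move=> b Nb.
  have [s0 a0] := Hmult a Na Ca.
  have Eb0 := Enorm_ge0 sc b.
  set t := eps / (Enorm sc b + 1).
  have t0 : 0 < t by rewrite divr_gt0 // ltr_pwDr.
  have Nab : N (a + t *: b) by apply: ND => //; apply: NZ.
  have Cab : Cone (a + t *: b).
    apply: Hball => //.
    rewrite addrC addKr EnormZ gtr0_norm //.
    have -> : eps = t * (Enorm sc b + 1) by rewrite /t divfK // gt_eqF // ltr_pwDr.
    by rewrite ltr_pM2l // ltrDl.
  have [s1 hs1] := Hmult _ Nab Cab.
  exists (t^-1 * (s1 - s0)).
  have tb : t *: b = (s1 - s0) *: x by rewrite scalerBl -hs1 -a0 addrC addKr.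
  by rewrite -scalerA -tb scalerA mulVf ?scale1r // gt_eqF.
have NoSig : forall i : 'I_n, ~ Sigma N i.
  move=> i [a' [Ca' [Na' [a'ne sig]]]].
  have [s hs] := Hall a' Na'.
  have xi : x.1 ord0 i = 0.
    move: sig; rewrite /sigma hs cZ => /eqP; rewrite mulf_eq0 => /orP [/eqP s0|/eqP //].
    by exfalso; apply: a'ne; rewrite hs s0 scale0r.
  have Ni : forall b, N b -> b.1 ord0 i = 0.
    by move=> b /Hall [s' ->]; rewrite cZ xi mulr0.
  have [Np0 [NpD NpZ]] := HNp.
  have Npi : forall m, Np m -> m.1 ord0 i = 0.
    move=> m Npm; apply: NNPP => mi.
    have [m' [Npm' m'i]] : exists m', Np m' /\ m'.1 ord0 i < 0.
      case: (ltP (m.1 ord0 i) 0) => h; first by exists m.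
      exists ((-1) *: m); split; first exact: NpZ.
      by rewrite cZ mulN1r oppr_lt0 lt_neqAle eq_sym h andbT; apply/eqP.
    have Ea' := Enorm_gt0 sc a'ne.
    have Em0 := Enorm_ge0 sc m'.
    set k := c * Enorm sc a' / (Enorm sc m' + 1).
    have k0 : 0 < k by rewrite divr_gt0 ?mulr_gt0 // ltr_pwDr.
    have hb : Enorm sc (k *: m') <= c * Enorm sc a'.
      rewrite EnormZ gtr0_norm //.
      have -> : c * Enorm sc a' = k * (Enorm sc m' + 1)
        by rewrite /k divfK // gt_eqF // ltr_pwDr.
      by rewrite ler_pM2l // lerDl.
    have [_ h2] := Hc a' (k *: m') Na' (NpZ k m' Npm') hb.
    have := h2 Ca' i; rewrite cD cZ sig add0r.
    by rewrite leNgt pmulr_rlt0 // m'i.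
  pose e : @E R n W := (delta_mx ord0 i, 0).
  have [Hdec _] := Hds 0.
  have [p [q [Np' [_ [Nq [_ epq]]]]]] := Hdec e (sc_lvl0 sc _).
  have : e.1 ord0 i = 1 by rewrite /= mxE !eqxx.
  by rewrite epq cD Ni // Npi // addr0 => /esym/eqP; rewrite oner_eq0.
split; last split => //.
  by move=> x0 _ i Si; exfalso; exact: (NoSig i Si).
exists x; split => // z; split.
  by move=> /NtN /Hall.
by move=> [t ->]; have [_ [_ HZ]] := HNt; apply: HZ.
Qed.
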